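(* Let $(A,q)$ be a metric group and let $n$ be the exponent of $A$. Then $(A,q)$ is isotropically generated if and only if (i) $q^n=1$, and (ii) $(A,q)$ contains a hyperbolic metric subgroup isomorphic to $(\mathbb{Z}/n\mathbb{Z}\times\mathbb{Z}/n\mathbb{Z},h)$, where $h(x,y)=\zeta^{xy}$ for a primitive $n$th root of unity $\zeta$.
   Context: $k$ is an algebraically closed field of characteristic $0$. A pre-metric group $(A,q)$ is a finite Abelian group $A$ with a quadratic form $q:A\to k^\times$; it is a metric group if $q$ is non-degenerate (its associated bilinear form $B(x,y)=q(x+y)/(q(x)q(y))$ is non-degenerate). $x\in A$ is isotropic if $q(x)=1$; $(A,q)$ is isotropically generated if $A$ is generated by its isotropic elements. A metric subgroup isomorphic to $(\mathbb{Z}/n\mathbb{Z}\times\mathbb{Z}/n\mathbb{Z},h)$ means a subgroup on which the restriction of $q$ is isomorphic to $h$. *)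

(* Defs.v *)
From HB Require Import structures.
From mathcomp Require Import all_boot all_order all_algebra all_fingroup all_solvable.
Set Implicit Arguments. Unset Strict Implicit. Unset Printing Implicit Defensive.
Import GRing.Theory.
Local Open Scope ring_scope.

(* The finite Abelian group A is the carrier of a finZmodType V (written
   additively).  A quadratic form takes values in k^x, i.e. nonzero elements
   of k. *)

Definition qbil (k : fieldType) (V : zmodType) (q : V -> k) (x y : V) : k :=
  q (x + y) / (q x * q y).

Definition quadratic_form (k : fieldType) (V : zmodType) (q : V -> k) : Prop :=
  [/\ forall x, q x != 0,
      forall x, q (- x) = q x,
      forall x y z, qbil q (x + y) z = qbil q x z * qbil q y z
    & forall x y z, qbil q x (y + z) = qbil q x y * qbil q x z].

Definition metric_group (k : fieldType) (V : zmodType) (q : V -> k) : Prop :=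
  quadratic_form q /\ forall x, (forall y, qbil q x y = 1) -> x = 0.

Definition isotropic (k : fieldType) (V : zmodType) (q : V -> k) (x : V) : bool :=
  q x == 1.

Definition isotropically_generated (k : fieldType) (V : finZmodType) (q : V -> k)
  : Prop := (<< [set x : V | isotropic q x] >>)%g = [set: V].

(* Z/nZ, for n >= 1 (for n = 0 this gives Z/1Z; only used with n >= 1) *)
Definition Zmod (n : nat) : finZmodType := 'I_n.-1.+1.

Definition hyperbolic_form (k : fieldType) (n : nat) (zeta : k)
  (z : (Zmod n * Zmod n)%type) : k := zeta ^+ (nat_of_ord z.1 * nat_of_ord z.2)%N.

(* (A,q) contains a metric subgroup isomorphic to (Z/nZ x Z/nZ, h): an
   injective group homomorphism f : Z/nZ x Z/nZ -> A with q o f = h. *)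
Definition contains_hyperbolic (k : fieldType) (V : finZmodType) (q : V -> k)
  (n : nat) (zeta : k) : Prop :=
  exists f : {additive (Zmod n * Zmod n)%type -> V},
    injective f /\ forall z, q (f z) = @hyperbolic_form k n zeta z.

(* Main.v *)
Require Import Defs.
From HB Require Import structures.
From mathcomp Require Import all_boot all_order all_algebra all_fingroup all_solvable.
Set Implicit Arguments. Unset Strict Implicit. Unset Printing Implicit Defensive.
Import GRing.Theory FinRing.Theory.
Local Open Scope ring_scope.
From mathcomp Require Import zify.

Section QF.
Variables (k : fieldType) (V : zmodType) (q : V -> k).
Hypothesis Hq : quadratic_form q.

Lemma qnz x : q x != 0. Proof. by case: Hq. Qed.
Lemma qN x : q (- x) = q x. Proof. by case: Hq. Qed.
Lemma BDl x y z : qbil q (x + y) z = qbil q x z * qbil q y z. Proof. by case: Hq. Qed.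
Lemma BDr x y z : qbil q x (y + z) = qbil q x y * qbil q x z. Proof. by case: Hq. Qed.

Lemma qD x y : q (x + y) = q x * q y * qbil q x y.
Proof. by rewrite /qbil mulrC divfK // mulf_neq0 ?qnz. Qed.

Lemma Bnz x y : qbil q x y != 0.
Proof. by rewrite /qbil; apply: mulf_neq0; rewrite ?invr_eq0 ?mulf_neq0 ?qnz. Qed.

Lemma BC x y : qbil q x y = qbil q y x.
Proof. by rewrite /qbil addrC [q x * _]mulrC. Qed.

Lemma B0l y : qbil q 0 y = 1.
Proof.
have := BDl 0 0 y; rewrite addr0 => h.
by apply: (mulfI (Bnz 0 y)); rewrite mulr1 -h.
Qed.

Lemma B0r y : qbil q y 0 = 1.
Proof. by rewrite BC B0l. Qed.

Lemma q0 : q 0 = 1.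
Proof.
have := B0l 0; rewrite /qbil addr0 invfM mulrA divff ?qnz // mul1r => /eqP.
by rewrite invr_eq1 => /eqP.
Qed.

Lemma BMnl x y m : qbil q (x *+ m) y = qbil q x y ^+ m.
Proof. by elim: m => [|m IH]; rewrite ?mulr0n ?B0l // mulrS BDl IH exprS. Qed.

Lemma BMnr x y m : qbil q x (y *+ m) = qbil q x y ^+ m.
Proof. by rewrite BC BMnl BC. Qed.

Lemma BNl x y : qbil q (- x) y = (qbil q x y)^-1.
Proof.
have := BDl x (- x) y; rewrite subrr B0l => h.
by apply: (mulfI (Bnz x y)); rewrite -h mulfV ?Bnz.
Qed.

Lemma Bxx x : qbil q x x = q x ^+ 2.
Proof.
have := qD x (- x); rewrite subrr q0 qN BC BNl => h.
by rewrite expr2 -[LHS]mul1r h mulfVK ?Bnz.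
Qed.

Lemma qMn x m : q (x *+ m) = q x ^+ (m * m).
Proof.
elim: m => [|m IH]; first by rewrite mulr0n q0.
rewrite mulrS qD IH BMnr Bxx -!exprM -[q x]expr1 -!exprM -!exprD; congr (_ ^+ _).
rewrite !mul1n mulSn mulnS; lia.
Qed.

End QF.
Section Roots.
Variable k : fieldType.

Lemma coprime_one (u : k) a b : (0 < a)%N -> coprime a b -> u ^+ a = 1 -> u ^+ b = 1 -> u = 1.
Proof.
move=> a0 cab ua ub; have [m pm dm] := prim_order_exists a0 ua.
have db : (m %| b)%N by rewrite (prim_order_dvd pm) ub.
have m1 : m = 1%N.
  by apply/eqP; rewrite -dvdn1 -(eqP cab) dvdn_gcd dm db.
by move: (prim_expr_order pm); rewrite m1 expr1.
Qed.

Lemma prim_mul (w1 w2 : k) u1 u2 : u1.-primitive_root w1 -> u2.-primitive_root w2 ->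
  coprime u1 u2 -> (u1 * u2)%N.-primitive_root (w1 * w2).
Proof.
move=> p1 p2 c12.
have g1 := prim_order_gt0 p1; have g2 := prim_order_gt0 p2.
have g12 : (0 < u1 * u2)%N by rewrite muln_gt0 g1 g2.
have e : (w1 * w2) ^+ (u1 * u2)%N = 1.
  by rewrite exprMn exprM (prim_expr_order p1) expr1n mulnC exprM (prim_expr_order p2) expr1n mulr1.
have [m pm dm] := prim_order_exists g12 e.
have em : (w1 * w2) ^+ m = 1 by rewrite (prim_expr_order pm).
have d1 : (u1 %| m)%N.
  rewrite -(@Gauss_dvdl _ _ u2) // (prim_order_dvd p1).
  have : (w1 * w2) ^+ (m * u2) = 1 by rewrite exprM em expr1n.

  by rewrite exprMn [(m * u2)%N]mulnC [w2 ^+ _]exprM (prim_expr_order p2) expr1n mulr1 => ->.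
have d2 : (u2 %| m)%N.
  rewrite -(@Gauss_dvdl _ _ u1) 1?coprime_sym // (prim_order_dvd p2).
  have : (w1 * w2) ^+ (m * u1) = 1 by rewrite exprM em expr1n.
  by rewrite exprMn [(m * u1)%N]mulnC [w1 ^+ _]exprM (prim_expr_order p1) expr1n mul1r => ->.
have -> : (u1 * u2)%N = m.
  by apply/eqP; rewrite eqn_dvd dm Gauss_dvd // d1 d2.
exact: pm.
Qed.

Lemma prim_part (z : k) d n (pi : nat_pred) : d.-primitive_root z -> (d %| n)%N -> (0 < n)%N ->
  (d`_pi).-primitive_root (z ^+ (n`_pi^' * n`_pi^')%N).
Proof.
move=> pz dn n0; have d0 := prim_order_gt0 pz.
have := exp_prim_root pz (n`_pi^' * n`_pi^')%N; congr (_.-primitive_root _).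
have cK : coprime (n`_pi^' * n`_pi^') d`_pi.
  by rewrite coprime_sym coprimeMr coprime_partC.
have -> : (gcdn (n`_pi^' * n`_pi^') d = d`_pi^')%N.
  rewrite -{1}(partnC pi d0) Gauss_gcdr //; apply/gcdn_idPr.
  by apply: dvdn_mulr; apply: partn_dvd.
by rewrite -{1}(partnC pi d0) mulnK // part_gt0.
Qed.

End Roots.

Section Main.
Variables (k : fieldType) (V : finZmodType) (q : V -> k).
Hypothesis Hq : quadratic_form q.
Local Notation n := (exponent [set: V]).

Lemma mulr_exp (x : V) : x *+ n = 0.
Proof. by rewrite -zmodXgE (expg_exponent (in_setT x)). Qed.

Lemma n_gt0 : (0 < n)%N. Proof. exact: exponent_gt0. Qed.

Lemma Bexp x y : qbil q x y ^+ n = 1.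
Proof. by rewrite -(BMnl Hq) mulr_exp (B0l Hq). Qed.

Lemma orth (pi : nat_pred) x y : x *+ n`_pi = 0 -> y *+ n`_pi^' = 0 -> qbil q x y = 1.
Proof.
move=> hx hy; apply: (@coprime_one _ _ n`_pi n`_pi^'); first exact: part_gt0.
  exact: coprime_partC.
  by rewrite -(BMnl Hq) hx (B0l Hq).
by rewrite -(BMnr Hq) hy (B0r Hq).
Qed.

Lemma kill (pi : nat_pred) (x : V) : (x *+ n`_pi) *+ n`_pi^' = 0.
Proof. by rewrite -mulrnA partnC ?mulr_exp // n_gt0. Qed.

Lemma kill' (pi : nat_pred) (x : V) : (x *+ n`_pi^') *+ n`_pi = 0.
Proof. by rewrite -mulrnA mulnC partnC ?mulr_exp // n_gt0. Qed.

Lemma BMnn x y K : qbil q (x *+ K) (y *+ K) = qbil q x y ^+ (K * K).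
Proof. by rewrite (BMnl Hq) (BMnr Hq) exprM. Qed.

Lemma combine (pi : nat_pred) a b c e d1 d2 :
  q a = 1 -> q b = 1 -> q c = 1 -> q e = 1 ->
  d1.-primitive_root (qbil q a b) -> d2.-primitive_root (qbil q c e) ->
  exists x y, [/\ q x = 1, q y = 1 & (d1`_pi^' * d2`_pi)%N.-primitive_root (qbil q x y)].
Proof.
move=> qa qb qc qe p1 p2.
have dv1 : (d1 %| n)%N by rewrite (prim_order_dvd p1) Bexp.
have dv2 : (d2 %| n)%N by rewrite (prim_order_dvd p2) Bexp.
set x1 := a *+ n`_pi; set y1 := b *+ n`_pi.
set x2 := c *+ n`_pi^'; set y2 := e *+ n`_pi^'.
have o12 : qbil q x1 x2 = 1 by rewrite (BC q) (orth (kill' _ _) (kill _ _)).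
have o12' : qbil q x1 y2 = 1 by rewrite (BC q) (orth (kill' _ _) (kill _ _)).
have o21 : qbil q x2 y1 = 1 by rewrite (orth (kill' _ _) (kill _ _)).
have sq : forall u m, q u = 1 -> q (u *+ m) = 1 by move=> u m h; rewrite (qMn Hq) h expr1n.
exists (x1 + x2), (y1 + y2); split.
- by rewrite (qD Hq) o12 !sq ?mulr1.
- rewrite (qD Hq) !sq // !mul1r (BC q) (orth (kill' _ _) (kill _ _)) //.
rewrite !(BDl Hq) !(BDr Hq) o12' o21 mulr1 mul1r !BMnn.
apply: prim_mul; last by rewrite coprime_sym coprime_partC.
  by rewrite -(partnNK pi n); apply: prim_part => //; exact: n_gt0.
by apply: prim_part => //; exact: n_gt0.
Qed.

End Main.

Section Gen.
Variable V : finZmodType.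

Lemma gen_closed (S : {set V}) (P : pred V) : P 0 -> (forall x y, P x -> P y -> P (x + y)) ->
  (forall x, x \in S -> P x) -> forall x, x \in (<<S>>)%g -> P x.
Proof.
move=> P0 PD PS.
have gP : group_set [set x | P x].
  apply/group_setP; split; first by rewrite inE.
  by move=> x y; rewrite !inE; apply: PD.
have : (<<S>> \subset Group gP)%g.
  by rewrite gen_subG; apply/subsetP => x /PS; rewrite inE.
by move/subsetP => h x /h; rewrite inE.
Qed.

Lemma inG_add (G : {group V}) x y : x \in G -> y \in G -> x + y \in G.
Proof. exact: groupM. Qed.
Lemma inG_opp (G : {group V}) x : x \in G -> - x \in G.
Proof. by move=> h; rewrite -zmodVgE groupV. Qed.
Lemma inG_mulrn (G : {group V}) x m : x \in G -> x *+ m \in G.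
Proof. by move=> h; rewrite -zmodXgE groupX. Qed.

End Gen.

Section Main2.
Variables (k : fieldType) (V : finZmodType) (q : V -> k).
Hypothesis Hq : quadratic_form q.
Local Notation n := (exponent [set: V]).

Lemma mod_gen (u : V) N j : u *+ N = 0 -> u *+ (j %% N) = u *+ j.
Proof.
by move=> h; rewrite {2}(divn_eq j N) mulrnDr mulnC mulrnA h mul0rn add0r.
Qed.

Lemma mulrn_sub (u : V) (i j : 'I_(n.-1).+1) : u *+ val (i - j) = u *+ val i - u *+ val j.
Proof.
have hN : u *+ (n.-1).+1 = 0 by rewrite prednK ?n_gt0 // mulr_exp.
rewrite /= mod_gen // mulrnDr mod_gen // mulrnBr; last by rewrite ltnW.
by rewrite hN sub0r.
Qed.

End Main2.

Theorem theorem6p2 (k : closedFieldType) (Hchar : [pchar k] =i pred0)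
  (V : finZmodType) (q : V -> k) (Hmetric : metric_group q) :
  let n := exponent [set: V] in
  isotropically_generated q <->
  ((forall x : V, q x ^+ n = 1) /\
   exists zeta : k, n.-primitive_root zeta /\ contains_hyperbolic q n zeta).
Proof.
cbv zeta; case: Hmetric => Hq Hnd; split.
- move=> Hgen.
  have inS : forall x, x \in (<<[set x | isotropic q x]>>)%g by move=> x; rewrite Hgen inE.
  have qn : forall x, q x ^+ exponent [set: V] = 1.
    move=> x; apply/eqP; move: x (inS x).
    apply: (@gen_closed _ _ (fun x => q x ^+ exponent [set: V] == 1)).
    + by rewrite (q0 Hq) expr1n.
    + move=> x y /eqP hx /eqP hy.
      by rewrite (qD Hq) exprMn (Bexp Hq) exprMn hx hy !mulr1.
    + by move=> x; rewrite inE /isotropic => /eqP ->; rewrite expr1n.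
  split=> //.
  pose P := fun d => [exists a, exists b, [&& q a == 1, q b == 1 & d.-primitive_root (qbil q a b)]].
  have P1 : exists d, P d.
    have [m pm _] := prim_order_exists (n_gt0 V) (Bexp Hq 0 0).
    exists m; apply/existsP; exists 0; apply/existsP; exists 0.
    by rewrite (q0 Hq) eqxx pm.
  have Pb : forall d, P d -> (d <= exponent [set: V])%N.
    move=> d /existsP[a /existsP[b /and3P[_ _ pd]]].
    by apply: dvdn_leq (n_gt0 V) _; rewrite (prim_order_dvd pd) (Bexp Hq).
  case: (ex_maxnP P1 Pb) => d Pd dmax.
  case/existsP: Pd => a /existsP[b /and3P[/eqP qa /eqP qb pd]].
  have d0 := prim_order_gt0 pd.
  have key : forall s t, q s = 1 -> q t = 1 -> qbil q s t ^+ d = 1.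
    move=> s t qs qt; have [m pm _] := prim_order_exists (n_gt0 V) (Bexp Hq s t).
    apply/eqP; rewrite -(prim_order_dvd pm).
    have m0 := prim_order_gt0 pm.
    apply/(dvdn_partP _ m0) => p pp; apply: contraT => hp.
    have [x [y [qx qy px]]] := combine Hq p qa qb qs qt pd pm.
    have Px : P (d`_p^' * m`_p)%N.
      by apply/existsP; exists x; apply/existsP; exists y; rewrite qx qy eqxx px.
    have := dmax _ Px; apply: contraLR => _; rewrite -ltnNge.
    move: pp; rewrite mem_primes => /and3P[pr _ _].
    rewrite p_part pfactor_dvdn // -ltnNge in hp.
    rewrite -{1}(partnC p d0) mulnC ltn_pmul2l ?part_gt0 //.
    by rewrite !p_part ltn_exp2l // prime_gt1.
  have key2 : forall x y, qbil q x y ^+ d = 1.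
    have h1 : forall t, q t = 1 -> forall x, qbil q x t ^+ d = 1.
      move=> t qt x; apply/eqP; move: x (inS x).
      apply: (@gen_closed _ _ (fun x => qbil q x t ^+ d == 1)).
      + by rewrite (B0l Hq) expr1n.
      + by move=> x y /eqP hx /eqP hy; rewrite (BDl Hq) exprMn hx hy mulr1.
      + by move=> x; rewrite inE /isotropic => /eqP hx; rewrite key.
    move=> x y; apply/eqP; move: y (inS y).
    apply: (@gen_closed _ _ (fun y => qbil q x y ^+ d == 1)).
    + by rewrite (B0r Hq) expr1n.
    + by move=> y z /eqP hy /eqP hz; rewrite (BDr Hq) exprMn hy hz mulr1.
    + by move=> y; rewrite inE /isotropic => /eqP hy; rewrite h1.
  have dn : d = exponent [set: V].
    apply/eqP; rewrite eqn_dvd (prim_order_dvd pd) (Bexp Hq) eqxx /=.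
    apply/exponentP => x _; rewrite zmodXgE zmod1gE.
    by apply: Hnd => y; rewrite (BMnl Hq) key2.
  exists (qbil q a b); split; first by rewrite -dn.
  have pz : (exponent [set: V]).-primitive_root (qbil q a b) by rewrite -dn.
  pose f := fun w : (Zmod (exponent [set: V]) * Zmod (exponent [set: V])) => a *+ val w.1 + b *+ val w.2.
  have fM : zmod_morphism f.
    move=> w1 w2; rewrite /f /=.
    rewrite (mulrn_sub a w1.1 w2.1) (mulrn_sub b w1.2 w2.2).
    by rewrite opprD addrACA.
  pose phi : {additive _ -> V} := HB.pack f (GRing.isZmodMorphism.Build _ _ f fM).
  exists phi; split.
  + move=> w1 w2 h.
    have h' : f w1 = f w2 := h.
    have hB : forall w, qbil q (f w) a = qbil q a b ^+ val w.2 /\ qbil q (f w) b = qbil q a b ^+ val w.1.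
      move=> w; rewrite /f !(BDl Hq) !(BMnl Hq) !(Bxx Hq) qa qb !expr1n mul1r mulr1.
      by rewrite [qbil q b a](BC q).
    have lt : forall i : Zmod (exponent [set: V]), (val i < exponent [set: V])%N.
      by move=> i; rewrite -[X in (_ < X)%N](prednK (n_gt0 V)) ltn_ord.
    have Ez : forall i j : Zmod (exponent [set: V]), qbil q a b ^+ val i = qbil q a b ^+ val j -> i = j.
      move=> i j /eqP; rewrite (eq_prim_root_expr pz) !modn_small ?lt //.
      by move/eqP/val_inj.
    have [h1 h2] := hB w1; have [h1' h2'] := hB w2.
    move: h1 h2 h1' h2'; rewrite h'; case: w1 w2 {h h'} => [i1 j1] [i2 j2] /= -> -> e1 e2.
    by rewrite (Ez _ _ e1) (Ez _ _ e2).
  + move=> w; rewrite /hyperbolic_form.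
    change (q (f w) = qbil q a b ^+ (val w.1 * val w.2)%N).
    rewrite /f (qD Hq) !(qMn Hq) qa qb !expr1n !mul1r (BMnl Hq) (BMnr Hq).
    by rewrite -exprM mulnC.
- case=> qn [z [pz [f [finj fq]]]].
  rewrite /isotropically_generated; apply/eqP; rewrite eqEsubset subsetT /=.
  apply/subsetP => x _.
  set S := [set x | isotropic q x].
  have [n1 | n2] := leqP (exponent [set: V]) 1.
    have e1 : exponent [set: V] = 1%N by apply/eqP; rewrite eqn_leq n1 n_gt0.
    have := mulr_exp x; rewrite e1 mulr1n => ->.
    by rewrite -zmod1gE group1.
  pose o : Zmod (exponent [set: V]) := inord 1.
  have vo : nat_of_ord o = 1%N by rewrite /o inordK // prednK ?n_gt0.
  set e1 := f (o, 0); set e2 := f (0, o).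
  have q1 : q e1 = 1 by rewrite /e1 fq /hyperbolic_form /= vo muln0 expr0.
  have q2 : q e2 = 1 by rewrite /e2 fq /hyperbolic_form /= vo mul0n expr0.
  have q12 : q (e1 + e2) = z.
    rewrite /e1 /e2 -raddfD /=.
    have -> : (o, 0) + (0, o) = (o, o) :> (Zmod (exponent [set: V]) * Zmod (exponent [set: V])).
      by change ((o + 0, 0 + o) = (o, o)); rewrite addr0 add0r.
    by rewrite fq /hyperbolic_form /= vo muln1 expr1.
  have B12 : qbil q e1 e2 = z by rewrite /qbil q12 q1 q2 mulr1 invr1 mulr1.
  have B21 : qbil q e2 e1 = z by rewrite (BC q).
  have B11 : qbil q e1 e1 = 1 by rewrite (Bxx Hq) q1 expr1n.
  have B22 : qbil q e2 e2 = 1 by rewrite (Bxx Hq) q2 expr1n.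
  have z0 : z != 0 by rewrite -B12 (Bnz Hq).
  have in1 : e1 \in <<S>>%G by apply: mem_gen; rewrite inE /isotropic q1.
  have in2 : e2 \in <<S>>%G by apply: mem_gen; rewrite inE /isotropic q2.
  have [s hs] := prim_rootP pz (Bexp Hq x e1).
  have [t ht] := prim_rootP pz (Bexp Hq x e2).
  pose h := e1 *+ t + e2 *+ s.
  have hh1 : qbil q (x - h) e1 = 1.
    rewrite (BDl Hq) (BNl Hq) hs /h (BDl Hq) !(BMnl Hq) B11 B21 expr1n mul1r.
    by rewrite mulfV // expf_neq0.
  have hh2 : qbil q (x - h) e2 = 1.
    rewrite (BDl Hq) (BNl Hq) ht /h (BDl Hq) !(BMnl Hq) B12 B22 expr1n mulr1.
    by rewrite mulfV // expf_neq0.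
  pose y := x - h.
  have [u hu] := prim_rootP pz (qn y).
  pose g := e1 + e2 *+ (exponent [set: V] - u).
  have qg : q g = z ^+ (exponent [set: V] - u).
    by rewrite /g (qD Hq) q1 (qMn Hq) q2 expr1n mul1r (BMnr Hq) B12 mul1r.
  have qyg : q (y + g) = 1.
    rewrite (qD Hq) hu qg /g (BDr Hq) (BMnr Hq) hh1 hh2 expr1n !mulr1 -exprD.
    by rewrite subnKC ?(prim_expr_order pz) // ltnW.
  have inyg : y + g \in <<S>>%G by apply: mem_gen; rewrite inE /isotropic qyg.
  have ing : g \in <<S>>%G by apply: inG_add => //; apply: inG_mulrn.
  have inh : h \in <<S>>%G by apply: inG_add; apply: inG_mulrn.
  have -> : x = (y + g) - g + h by rewrite addrK subrK.
  by apply: inG_add => //; apply: inG_add => //; apply: inG_opp.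
Qed.
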